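(* Let $\{a_n\}_{n\ge 0}$ be a sequence of positive real numbers and let $N_0$ be a positive integer. (1) Suppose that $a_n^2-a_{n-1}a_{n+1}>0$ for all $n\ge N_0+1$ (strict log-concavity of $\{a_n\}_{n\ge N_0}$), and that $$\left(\frac{a_n}{a_{n-1}}\right)^2<\frac{a_{n-1}}{a_{n-2}}\cdot\frac{a_{n+1}}{a_n}\quad\text{for all } n\ge N_0+2$$ (strict ratio-log-convexity of $\{a_n\}_{n\ge N_0}$). Then for all $n\ge N_0+1$, $$a_n^2(a_n^2-a_{n-1}a_{n+1})>a_{n-1}^2(a_{n+1}^2-a_na_{n+2}).$$ (2) Suppose instead that $\{a_n\}_{n\ge N_0}$ is strictly $2$-log-convex, i.e. setting $b_n=a_{n-1}a_{n+1}-a_n^2$, we have $b_n>0$ for all $n\ge N_0+1$ and $b_n^2<b_{n-1}b_{n+1}$ for all $n\ge N_0+2$, and that the strict ratio-log-convexity condition of part (1) holds. Then the same inequality $a_n^2(a_n^2-a_{n-1}a_{n+1})>a_{n-1}^2(a_{n+1}^2-a_na_{n+2})$ holds for all $n\ge N_0+2$. *)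

(* Defs.v *)
From Stdlib Require Import Reals.
Open Scope R_scope.

Definition bseq (a : nat -> R) (n : nat) : R :=
  a (n - 1)%nat * a (n + 1)%nat - a n ^ 2.

(* Main.v *)
Require Import Defs.
From Stdlib Require Import Reals Lra Lia Psatz.
Open Scope R_scope.

Lemma key (x y z w : R) : 0 < x -> 0 < y -> 0 < z -> 0 < w ->
  (z / y) ^ 2 < (y / x) * (w / z) ->
  y ^ 2 * (y ^ 2 - x * z) > x ^ 2 * (z ^ 2 - y * w).
Proof.
  intros hx hy hz hw H.
  assert (E1 : (z / y) ^ 2 * (x * y ^ 2 * z) = x * z ^ 3) by (field; lra).
  assert (E2 : (y / x) * (w / z) * (x * y ^ 2 * z) = y ^ 3 * w) by (field; lra).
  assert (P : 0 < x * y ^ 2 * z) by (apply Rmult_lt_0_compat; [apply Rmult_lt_0_compat|]; nra).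
  assert (H2 : x * z ^ 3 < y ^ 3 * w) by (rewrite <- E1, <- E2; apply Rmult_lt_compat_r; auto).
  assert (Id : y ^ 2 * (y ^ 2 * (y ^ 2 - x * z) - x ^ 2 * (z ^ 2 - y * w))
     = (y ^ 2 - x * z) ^ 2 * (y ^ 2 + x * z) + x ^ 2 * (y ^ 3 * w - x * z ^ 3)) by ring.
  assert (Q : 0 < y ^ 2 * (y ^ 2 * (y ^ 2 - x * z) - x ^ 2 * (z ^ 2 - y * w))).
  { rewrite Id. apply Rplus_le_lt_0_compat.
    - apply Rmult_le_pos; [apply pow2_ge_0|]. nra.
    - apply Rmult_lt_0_compat; nra. }
  assert (0 < y ^ 2) by nra.
  nra.
Qed.
Theorem theorem4p1 (a : nat -> R) (N0 : nat) :
  (forall n, 0 < a n) -> (0 < N0)%nat ->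
  ( (* part (1) *)
    (forall n, (N0 + 1 <= n)%nat -> a n ^ 2 - a (n - 1)%nat * a (n + 1)%nat > 0) ->
    (forall n, (N0 + 2 <= n)%nat ->
       (a n / a (n - 1)%nat) ^ 2 <
       (a (n - 1)%nat / a (n - 2)%nat) * (a (n + 1)%nat / a n)) ->
    forall n, (N0 + 1 <= n)%nat ->
      a n ^ 2 * (a n ^ 2 - a (n - 1)%nat * a (n + 1)%nat) >
      a (n - 1)%nat ^ 2 * (a (n + 1)%nat ^ 2 - a n * a (n + 2)%nat) )
  /\
  ( (* part (2) *)
    (forall n, (N0 + 1 <= n)%nat -> bseq a n > 0) ->
    (forall n, (N0 + 2 <= n)%nat ->
       bseq a n ^ 2 < bseq a (n - 1)%nat * bseq a (n + 1)%nat) ->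
    (forall n, (N0 + 2 <= n)%nat ->
       (a n / a (n - 1)%nat) ^ 2 <
       (a (n - 1)%nat / a (n - 2)%nat) * (a (n + 1)%nat / a n)) ->
    forall n, (N0 + 2 <= n)%nat ->
      a n ^ 2 * (a n ^ 2 - a (n - 1)%nat * a (n + 1)%nat) >
      a (n - 1)%nat ^ 2 * (a (n + 1)%nat ^ 2 - a n * a (n + 2)%nat) ).
Proof.
  intros Hpos HN. split.
  - intros _ Hr n Hn.
    pose proof (Hr (n + 1)%nat ltac:(lia)) as H.
    replace ((n + 1) - 1)%nat with n in H by lia.
    replace ((n + 1) - 2)%nat with (n - 1)%nat in H by lia.
    replace ((n + 1) + 1)%nat with (n + 2)%nat in H by lia.
    apply key; auto.
  - intros _ _ Hr n Hn.
    pose proof (Hr (n + 1)%nat ltac:(lia)) as H.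
    replace ((n + 1) - 1)%nat with n in H by lia.
    replace ((n + 1) - 2)%nat with (n - 1)%nat in H by lia.
    replace ((n + 1) + 1)%nat with (n + 2)%nat in H by lia.
    apply key; auto.
Qed.
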